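(* Let $\mathsf V$ be a pseudovariety of semigroups. Then $\mathsf V$ is concatenation-closed if and only if the pseudovariety of semigroupoids $g\mathsf V$ is concatenation-closed.
   Context: A pseudovariety of semigroups is a class of finite semigroups closed under subsemigroups, homomorphic images and finite direct products; a pseudovariety of semigroupoids is a class of finite semigroupoids closed under divisors, finite direct products and finite coproducts (semigroups being one-vertex semigroupoids; composition of edges $s,t$ is defined when the source of $s$ equals the range of $t$). $g\mathsf V$ is the smallest pseudovariety of semigroupoids containing $\mathsf V$. For a graph $A$ with free semigroupoid of paths $A^+$, a language $L\subseteq E(A^+)$ is $\mathsf W$-recognizable if $L=\varphi^{-1}\varphi(L)$ for a homomorphism $\varphi\colon A^+\to F$ with $F\in\mathsf W$; concatenation $LK$ consists of the composable products $uv$, $u\in L$, $v\in K$. A pseudovariety of semigroups (resp. semigroupoids) is concatenation-closed if for every finite alphabet (resp. finite graph) $A$ the recognizable languages over $A$ are closed under concatenation. *)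

(* Defs.v *)
From mathcomp Require Import all_boot.
Set Implicit Arguments. Unset Strict Implicit. Unset Printing Implicit Defensive.

Record finSemigroup := FinSemigroup {
  scar : finType;
  smul : scar -> scar -> scar;
  smulA : forall x y z, smul x (smul y z) = smul (smul x y) z }.
Arguments smul {_}.

Definition sg_morph (S T : finSemigroup) (f : scar S -> scar T) :=
  forall x y, f (smul x y) = smul (f x) (f y).

Definition trivial_sg : finSemigroup :=
  @FinSemigroup unit (fun _ _ => tt) (fun _ _ _ => erefl).

Definition prod_sg (S T : finSemigroup) : finSemigroup.
Proof.
refine (@FinSemigroup (prod (scar S) (scar T))
  (fun x y => (smul x.1 y.1, smul x.2 y.2)) _).
by move=> [x1 x2] [y1 y2] [z1 z2] /=; rewrite !smulA.
Defined.

(* Closure under subsemigroups (up to isomorphism: injective morphisms),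
   homomorphic images (surjective morphisms) and finite direct products
   (the empty product being the trivial semigroup). *)
Definition sg_pseudovariety (V : finSemigroup -> Prop) :=
  [/\ (forall S T (f : scar S -> scar T),
          injective f -> sg_morph f -> V T -> V S),
      (forall S T (f : scar S -> scar T),
          (forall y, exists x, f x = y) -> sg_morph f -> V S -> V T),
      V trivial_sg &
      (forall S T, V S -> V T -> V (prod_sg S T))].

(* Free semigroup A^+ : the nonempty word a :: q is represented by (a, q). *)
Definition word (A : finType) := (A * seq A)%type.
Definition wcat (A : finType) (u v : word A) : word A :=
  (u.1, u.2 ++ v.1 :: v.2).

Definition sg_recognizable (V : finSemigroup -> Prop) (A : finType)
    (L : word A -> Prop) :=
  exists (S : finSemigroup) (phi : word A -> scar S),
    [/\ V S,
        (forall u v, phi (wcat u v) = smul (phi u) (phi v)) &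
        (forall u, L u <-> exists v, L v /\ phi v = phi u)].

Definition sg_concat (A : finType) (L K : word A -> Prop) : word A -> Prop :=
  fun w => exists u v, [/\ L u, K v & w = wcat u v].

Definition sg_concat_closed (V : finSemigroup -> Prop) :=
  forall (A : finType) (L K : word A -> Prop),
    sg_recognizable V L -> sg_recognizable V K ->
    sg_recognizable V (sg_concat L K).

(* comp s t (= st) is meaningful when dom s = cod t                    *)
(* (source of s = range of t); outside that it is junk.                *)

Record finSemigroupoid := FinSemigroupoid {
  vtx : finType;
  edg : finType;
  dom : edg -> vtx;
  cod : edg -> vtx;
  comp : edg -> edg -> edg;
  comp_dom : forall s t, dom s = cod t -> dom (comp s t) = dom t;
  comp_cod : forall s t, dom s = cod t -> cod (comp s t) = cod s;
  compA : forall s t u, dom s = cod t -> dom t = cod u ->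
     comp (comp s t) u = comp s (comp t u) }.
Arguments dom {_}. Arguments cod {_}. Arguments comp {_}.

Definition sgd_of_sg (S : finSemigroup) : finSemigroupoid.
Proof.
refine (@FinSemigroupoid unit (scar S) (fun _ => tt) (fun _ => tt)
   smul _ _ _) => //.
by move=> s t u _ _; rewrite smulA.
Defined.

Definition trivial_sgd : finSemigroupoid :=
  sgd_of_sg trivial_sg.

Definition empty_sgd : finSemigroupoid.
Proof.
refine (@FinSemigroupoid void void (fun x => x) (fun x => x)
  (fun x _ => x) _ _ _); by case.
Defined.

Definition prod_sgd (C D : finSemigroupoid) : finSemigroupoid.
Proof.
refine (@FinSemigroupoid (prod (vtx C) (vtx D)) (prod (edg C) (edg D))
  (fun s => (dom s.1, dom s.2)) (fun s => (cod s.1, cod s.2))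
  (fun s t => (comp s.1 t.1, comp s.2 t.2)) _ _ _).
- by move=> [s1 s2] [t1 t2] /= [h1 h2]; rewrite !comp_dom.
- by move=> [s1 s2] [t1 t2] /= [h1 h2]; rewrite !comp_cod.
- by move=> [s1 s2] [t1 t2] [u1 u2] /= [h1 h2] [k1 k2]; rewrite !compA.
Defined.

Definition coprod_comp (C D : finSemigroupoid) (s t : edg C + edg D) :
    edg C + edg D :=
  match s, t with
  | inl s, inl t => inl (comp s t)
  | inr s, inr t => inr (comp s t)
  | _, _ => s
  end.

Definition coprod_sgd (C D : finSemigroupoid) : finSemigroupoid.
Proof.
refine (@FinSemigroupoid (sum (vtx C) (vtx D)) (sum (edg C) (edg D))
  (fun s => match s with inl s => inl (dom s) | inr s => inr (dom s) end)
  (fun s => match s with inl s => inl (cod s) | inr s => inr (cod s) end)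
  (@coprod_comp C D) _ _ _).
- by move=> [s|s] [t|t] //= [h]; rewrite comp_dom.
- by move=> [s|s] [t|t] //= [h]; rewrite comp_cod.
- by move=> [s|s] [t|t] [u|u] //= [h] [k]; rewrite compA.
Defined.

(* Division D ≺ C (Tilson): a relational morphism (function on vertices,
   nonempty relation on edges, compatible with ends and composition)
   which is injective on coterminal edges. *)
Definition divides (D C : finSemigroupoid) :=
  exists (tv : vtx D -> vtx C) (te : edg D -> edg C -> Prop),
    [/\ (forall s, exists s', te s s'),
        (forall s s', te s s' -> dom s' = tv (dom s) /\ cod s' = tv (cod s)),
        (forall s t s' t', dom s = cod t -> te s s' -> te t t' ->
            te (comp s t) (comp s' t')) &
        (forall s t s', dom s = dom t -> cod s = cod t ->
            te s s' -> te t s' -> s = t)].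

(* Closure under divisors, finite direct products and finite coproducts
   (empty product = trivial semigroupoid, empty coproduct = empty one). *)
Definition sgd_pseudovariety (W : finSemigroupoid -> Prop) :=
  [/\ (forall D C, divides D C -> W C -> W D),
      W trivial_sgd,
      (forall C D, W C -> W D -> W (prod_sgd C D)),
      W empty_sgd &
      (forall C D, W C -> W D -> W (coprod_sgd C D))].

Definition gV (V : finSemigroup -> Prop) : finSemigroupoid -> Prop :=
  fun C => forall W, sgd_pseudovariety W ->
    (forall S, V S -> W (sgd_of_sg S)) -> W C.

Record graph := Graph {
  gvtx : finType;
  gedg : finType;
  gdom : gedg -> gvtx;
  gcod : gedg -> gvtx }.
Arguments gdom {_}. Arguments gcod {_}.

Definition gadj (A : graph) (a b : gedg A) := gdom a == gcod b.

(* A path a_1 a_2 ... a_n (n >= 1) with source(a_i) = range(a_{i+1}),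
   represented by (a_1, [a_2; ...; a_n]). *)
Definition gpath (A : graph) :=
  {p : gedg A * seq (gedg A) | path (@gadj A) p.1 p.2}.

Definition pdom (A : graph) (u : gpath A) : gvtx A :=
  gdom (last (val u).1 (val u).2).
Definition pcod (A : graph) (u : gpath A) : gvtx A := gcod (val u).1.

(* product uv of paths (concatenation); meaningful when pdom u = pcod v *)
Definition pcat (A : graph) (u v : gpath A) : gpath A :=
  insubd u ((val u).1, (val u).2 ++ (val v).1 :: (val v).2).

Definition sgd_hom (A : graph) (F : finSemigroupoid)
    (fv : gvtx A -> vtx F) (fe : gpath A -> edg F) :=
  [/\ (forall u, dom (fe u) = fv (pdom u)),
      (forall u, cod (fe u) = fv (pcod u)) &
      (forall u v, pdom u = pcod v -> fe (pcat u v) = comp (fe u) (fe v))].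

Definition sgd_recognizable (W : finSemigroupoid -> Prop) (A : graph)
    (L : gpath A -> Prop) :=
  exists (F : finSemigroupoid) (fv : gvtx A -> vtx F) (fe : gpath A -> edg F),
    [/\ W F, sgd_hom fv fe &
        (forall u, L u <-> exists v, L v /\ fe v = fe u)].

Definition sgd_concat (A : graph) (L K : gpath A -> Prop) : gpath A -> Prop :=
  fun w => exists u v, [/\ L u, K v, pdom u = pcod v & w = pcat u v].

Definition sgd_concat_closed (W : finSemigroupoid -> Prop) :=
  forall (A : graph) (L K : gpath A -> Prop),
    sgd_recognizable W L -> sgd_recognizable W K ->
    sgd_recognizable W (sgd_concat L K).

(* Main.v *)
Require Import Defs.
From mathcomp Require Import all_boot.
From Stdlib Require Import ClassicalEpsilon.
Set Implicit Arguments. Unset Strict Implicit. Unset Printing Implicit Defensive.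

Lemma div_refl C : divides C C.
Proof.
exists id, (fun s s' => s' = s); split.
- by move=> s; exists s.
- by move=> s s' ->.
- by move=> s t s' t' _ -> ->.
- by move=> s t s' _ _ -> ->.
Qed.

Lemma div_trans D C E : divides D C -> divides C E -> divides D E.
Proof.
move=> [tv [te [H1 H2 H3 H4]]] [tv' [te' [H1' H2' H3' H4']]].
exists (tv' \o tv), (fun s s'' => exists s', te s s' /\ te' s' s''); split.
- move=> s; have [s' hs] := H1 s; have [s'' hs'] := H1' s'; by exists s'', s'.
- move=> s s'' [s' [h h']]; have [d c] := H2 _ _ h; have [d' c'] := H2' _ _ h'.
  by rewrite d' c' d c.
- move=> s t s'' t'' e [s' [h h']] [t' [k k']].
  exists (Defs.comp s' t'); split; first exact: H3.
  apply: H3' => //.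
  have [d _] := H2 _ _ h; have [_ c] := H2 _ _ k; by rewrite d c e.
- move=> s t s'' ed ec [s1 [h h']] [t1 [k k']].
  have [d1 c1] := H2 _ _ h; have [d2 c2] := H2 _ _ k.
  have e1 : s1 = t1 by apply: (H4' _ _ s'') => //; [rewrite d1 d2 ed | rewrite c1 c2 ec].
  subst t1; exact: (H4 _ _ s1).
Qed.

Lemma gV_div V D C : divides D C -> gV V C -> gV V D.
Proof. by move=> h hC W [Hd ? ? ? ?] HV; apply: (Hd D C h); apply: hC. Qed.

Definition Wd (V : finSemigroup -> Prop) C := exists S, V S /\ divides C (sgd_of_sg S).

Definition compat C X (te : edg C -> scar X -> Prop) :=
  forall s t a b, dom s = cod t -> te s a -> te t b -> te (Defs.comp s t) (smul a b).
Definition injd C X (te : edg C -> scar X -> Prop) :=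
  forall s t a, dom s = dom t -> cod s = cod t -> te s a -> te t a -> s = t.

Lemma div_sg C X : divides C (sgd_of_sg X) <->
  exists te : edg C -> scar X -> Prop, [/\ forall s, exists a, te s a, compat te & injd te].
Proof.
split.
- move=> [tv [te [H1 H2 H3 H4]]]; exists te; split.
  + exact: H1.
  + move=> s t a b e ha hb; exact: (H3 s t a b e ha hb).
  + move=> s t a ed ec ha hb; exact: (H4 s t a ed ec ha hb).
- move=> [te [H1 H3 H4]]; exists (fun _ => tt), te; split.
  + exact: H1.
  + by [].
  + move=> s t a b e ha hb; exact: (H3 s t a b e ha hb).
  + move=> s t a ed ec ha hb; exact: (H4 s t a ed ec ha hb).
Qed.

Lemma div_coprod_X C D X (teC : edg C -> scar X -> Prop) (teD : edg D -> scar X -> Prop) :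
  (forall s, exists a, teC s a) -> compat teC -> injd teC ->
  (forall s, exists a, teD s a) -> compat teD -> injd teD ->
  divides (coprod_sgd C D) (sgd_of_sg X).
Proof.
move=> H1 H3 H4 K1 K3 K4; apply/div_sg.
exists (fun s a => match s with inl c => teC c a | inr d => teD d a end); split.
- by case=> s; [apply: H1 | apply: K1].
- by case=> s [t|t] a b //= [e] ha hb; [apply: H3 | apply: K3].
- case=> s [t|t] a //= [ed] [ec] ha hb; [by rewrite (H4 s t a) | by rewrite (K4 s t a)].
Qed.

Lemma Wd_pv V : sg_pseudovariety V -> sgd_pseudovariety (Wd V).
Proof.
move=> [Vsub Vim Vtriv Vprod]; split.
- by move=> D C h [S [HS h']]; exists S; split=> //; apply: div_trans h h'.
- by exists trivial_sg; split=> //; apply: div_refl.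
- move=> C D [S [HS hC]] [T [HT hD]]; exists (prod_sg S T); split; first exact: Vprod.
  move/div_sg: hC => [te [H1 H3 H4]]; move/div_sg: hD => [te' [K1 K3 K4]].
  apply/div_sg; exists (fun s a => te s.1 a.1 /\ te' s.2 a.2); split.
  + move=> [s1 s2]; have [a ha] := H1 s1; have [b hb] := K1 s2; by exists (a, b).
  + move=> [s1 s2] [t1 t2] [a1 a2] [b1 b2] /= [e1 e2] [h1 h2] [k1 k2]; split.
    * exact: H3. * exact: K3.
  + move=> [s1 s2] [t1 t2] [a1 a2] /= [e1 e2] [c1 c2] [h1 h2] [k1 k2].
    by rewrite (H4 s1 t1 a1) // (K4 s2 t2 a2).
- exists trivial_sg; split=> //; exists (fun v : vtx empty_sgd => match v with end),
    (fun _ _ => False); by split; case.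
- move=> C D [S [HS hC]] [T [HT hD]].
  move/div_sg: hC => [te [H1 H3 H4]]; move/div_sg: hD => [te' [K1 K3 K4]].
  case: (pickP (fun _ : scar S => true)) => [s0 _|nS].
  + case: (pickP (fun _ : scar T => true)) => [t0 _|nT].
    * exists (prod_sg S T); split; first exact: Vprod.
      apply: (@div_coprod_X _ _ (prod_sg S T) (fun c (a : scar (prod_sg S T)) => te c a.1) (fun d (a : scar (prod_sg S T)) => te' d a.2)).
      -- by move=> c; have [a ha] := H1 c; exists (a, t0).
      -- by move=> s t a b e ha hb; apply: H3.
      -- by move=> s t a ed ec ha hb; apply: (H4 s t a.1).
      -- by move=> c; have [a ha] := K1 c; exists (s0, a).
      -- by move=> s t a b e ha hb; apply: K3.
      -- by move=> s t a ed ec ha hb; apply: (K4 s t a.2).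
    * exists S; split=> //.
      apply: (@div_coprod_X _ _ S te (fun _ _ => False)) => //.
      by move=> d; have [a _] := K1 d; have := nT a.
  + exists T; split=> //.
    apply: (@div_coprod_X _ _ T (fun _ _ => False) te') => //.
    by move=> d; have [a _] := H1 d; have := nS a.
Qed.

Lemma gV_char V : sg_pseudovariety V -> forall C, gV V C -> Wd V C.
Proof.
move=> HV C hC; apply: hC; first exact: Wd_pv.
by move=> S HS; exists S; split=> //; apply: div_refl.
Qed.

Lemma pcat_val (A : graph) (u v : gpath A) : pdom u = pcod v ->
  val (pcat u v) = wcat (val u) (val v).
Proof.
move=> e; rewrite /pcat insubdK //= unfold_in /=.
rewrite cat_path (valP u) /=; apply/andP; split; last exact: (valP v).
by rewrite /gadj; apply/eqP.
Qed.

Lemma pcat_dom (A : graph) (u v : gpath A) : pdom u = pcod v -> pdom (pcat u v) = pdom v.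
Proof. by move=> e; rewrite /pdom pcat_val //= last_cat. Qed.

Lemma pcat_cod (A : graph) (u v : gpath A) : pdom u = pcod v -> pcod (pcat u v) = pcod u.
Proof. by move=> e; rewrite /pcod pcat_val. Qed.

Definition wfold (A : finType) (S : finSemigroup) (c : A -> scar S) (w : word A) :=
  foldl (fun acc x => smul acc (c x)) (c w.1) w.2.

Lemma foldl_smul (A : finType) (S : finSemigroup) (c : A -> scar S) x y s :
  foldl (fun acc x => smul acc (c x)) (smul x y) s = smul x (foldl (fun acc x => smul acc (c x)) y s).
Proof. by elim: s y => [|a s IH] y //=; rewrite -smulA IH. Qed.

Lemma wfoldM (A : finType) (S : finSemigroup) (c : A -> scar S) u v :
  wfold c (wcat u v) = smul (wfold c u) (wfold c v).
Proof. by rewrite /wfold /wcat /= foldl_cat /= foldl_smul. Qed.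

Definition single (A : graph) (e : gedg A) : gpath A := exist _ (e, [::]) isT.

Lemma key (A : graph) (F : finSemigroupoid) (S : finSemigroup)
   (fv : gvtx A -> vtx F) (fe : gpath A -> edg F) :
  divides F (sgd_of_sg S) -> sgd_hom fv fe ->
  exists psi : word (gedg A) -> scar S,
    (forall u v, psi (wcat u v) = smul (psi u) (psi v)) /\
    (forall p q : gpath A, pdom p = pdom q -> pcod p = pcod q ->
        psi (val p) = psi (val q) -> fe p = fe q).
Proof.
move=> [tv [te [H1 H2 H3 H4]]] [Hd Hc Hm].
pose c e := proj1_sig (constructive_indefinite_description _ (H1 (fe (single e)))).
have hc e : te (fe (single e)) (c e) by rewrite /c; case: constructive_indefinite_description.
exists (wfold c); split; first exact: wfoldM.
have main : forall p : gpath A, te (fe p) (wfold c (val p)).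
  move=> [[a q] Hp]; elim/last_ind: q Hp => [|q b IH] Hp.
    by have -> : exist _ (a, [::]) Hp = single a by apply: val_inj.
  have Hq : path (@gadj A) a q by move: Hp; rewrite rcons_path => /andP[].
  have Hb : gadj (last a q) b by move: Hp; rewrite rcons_path => /andP[].
  pose p1 : gpath A := exist _ (a, q) Hq.
  have e : pdom p1 = pcod (single b) by apply/eqP.
  have -> : exist _ (a, rcons q b) Hp = pcat p1 (single b).
    by apply: val_inj; rewrite pcat_val // /wcat /= cats1.
  rewrite pcat_val //= wfoldM Hm //.
  apply: H3; [by rewrite Hd Hc e | exact: IH | exact: hc].
move=> p q ed ec ep.
apply: (H4 _ _ (wfold c (val p))); [by rewrite !Hd ed | by rewrite !Hc ec | exact: main | rewrite ep; exact: main].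
Qed.

Section Rec.
Variable V : finSemigroup -> Prop.
Hypothesis HV : sg_pseudovariety V.

Lemma rec_ext (A : finType) (L L' : word A -> Prop) :
  (forall w, L w <-> L' w) -> sg_recognizable V L -> sg_recognizable V L'.
Proof.
move=> e [S [phi [HS Hm Hr]]]; exists S, phi; split=> // u.
split.
- move=> /e /Hr [v [h1 h2]]; exists v; split=> //; exact/e.
- move=> [v [h1 h2]]; apply/e/Hr; exists v; split=> //; exact/e.
Qed.

Lemma rec_full (A : finType) : sg_recognizable V (fun _ : word A => True).
Proof.
case: HV => _ _ Ht _; exists trivial_sg, (fun _ => tt); split=> // u; split=> // _; by exists u.
Qed.

Lemma rec_compl (A : finType) (L : word A -> Prop) :
  sg_recognizable V L -> sg_recognizable V (fun w => ~ L w).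
Proof.
move=> [S [phi [HS Hm Hr]]]; exists S, phi; split=> // u; split.
- by move=> h; exists u.
- move=> [v [hv e]] hu; apply: hv; apply/Hr; by exists u.
Qed.

Lemma rec_pre (A B : finType) (L : word B -> Prop) (h : word A -> word B) :
  (forall u v, h (wcat u v) = wcat (h u) (h v)) ->
  sg_recognizable V L -> sg_recognizable V (fun w => L (h w)).
Proof.
move=> hm [S [phi [HS Hm Hr]]]; exists S, (phi \o h); split=> //.
- by move=> u v /=; rewrite hm Hm.
- move=> u; split; first by move=> hu; exists u.
  move=> [v [hv /= e]]; apply/Hr; by exists (h v).
Qed.

Lemma rec_family (A I : finType) (Lf : I -> word A -> Prop) :
  (forall i, sg_recognizable V (Lf i)) ->
  exists (S : finSemigroup) (phi : word A -> scar S),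
    [/\ V S, (forall u v, phi (wcat u v) = smul (phi u) (phi v)) &
        (forall i u v, phi u = phi v -> Lf i u -> Lf i v)].
Proof.
case: HV => _ _ Ht Hp hL.
suff: forall s : seq I, exists (S : finSemigroup) (phi : word A -> scar S),
    [/\ V S, (forall u v, phi (wcat u v) = smul (phi u) (phi v)) &
        (forall i u v, i \in s -> phi u = phi v -> Lf i u -> Lf i v)].
  move=> /(_ (enum I)) [S [phi [HS Hm Hr]]]; exists S, phi; split=> // i u v.
  by apply: Hr; rewrite mem_enum.
elim=> [|i s [S [phi [HS Hm Hr]]]].
  by exists trivial_sg, (fun _ => tt); split.
have [T [psi [HT Hm' Hr']]] := hL i.
exists (prod_sg T S), (fun w => (psi w, phi w)); split.
- exact: Hp.
- by move=> u v; rewrite Hm Hm'.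
- move=> j u v; rewrite inE => /orP[/eqP -> | js] [e1 e2] hu.
  + apply/Hr'; by exists u.
  + exact: (Hr j u v).
Qed.

End Rec.

Section FL.
Variable V : finSemigroup -> Prop.
Hypothesis HV : sg_pseudovariety V.
Hypothesis HC : sg_concat_closed V.

Definition fullb := fun _ : word bool => True.

Lemma concat_full (x : word bool) : sg_concat fullb fullb x <-> x.2 <> [::].
Proof.
split.
- by move=> [u [v [_ _ ->]]] /=; case: (u.2).
- case: x => a [|b q] //= _; exists (a, [::]), (b, q); split=> //.
Qed.

Definition g2 (b : bool) := if b then [:: true; true] else [:: false].
Definition h2 (w : word bool) : word bool :=
  (w.1, (if w.1 then [:: true] else [::]) ++ flatten (map g2 w.2)).

Lemma h2M u v : h2 (wcat u v) = wcat (h2 u) (h2 v).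
Proof.
case: u => a q; case: v => b r; rewrite /h2 /wcat /= map_cat flatten_cat /=.
by case: b; rewrite -!catA.
Qed.

Definition singleb := fun w : word bool => w = (false, [::]).

Lemma rec_singleb : sg_recognizable V singleb.
Proof.
have h := rec_compl (rec_pre h2M (HC (rec_full HV bool) (rec_full HV bool))).
apply: rec_ext h => -[a q] /=; rewrite /singleb; split.
- move=> H; have H' : ~ (h2 (a, q)).2 <> [::] by move=> h; apply: H; apply/concat_full.
  clear H; move: H'; rewrite /h2 /=; case: a => /= H2.
    by exfalso; apply: H2.
  case: q H2 => [|b q] //= H2; exfalso; apply: H2; by case: b.
- by case=> -> -> /= /concat_full.
Qed.

Lemma rec_lastF : sg_recognizable V (sg_concat fullb singleb).
Proof. exact: HC (rec_full HV bool) rec_singleb. Qed.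

Lemma rec_firstF : sg_recognizable V (sg_concat singleb fullb).
Proof. exact: HC rec_singleb (rec_full HV bool). Qed.

Variable A : finType.
Variable c : A.
Definition fc (e : A) := e != c.
Definition GL (e : A) := [:: true; fc e].
Definition hL (w : word A) : word bool := (true, fc w.1 :: flatten (map GL w.2)).
Definition GF (e : A) := [:: fc e; true].
Definition hF (w : word A) : word bool := (fc w.1, true :: flatten (map GF w.2)).

Lemma hLM u v : hL (wcat u v) = wcat (hL u) (hL v).
Proof. by case: u => a q; case: v => b r; rewrite /hL /wcat /= map_cat flatten_cat. Qed.

Lemma hFM u v : hF (wcat u v) = wcat (hF u) (hF v).
Proof. by case: u => a q; case: v => b r; rewrite /hF /wcat /= map_cat flatten_cat. Qed.

Lemma lastH a q : last (fc a) (flatten (map GL q)) = fc (last a q).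
Proof. by elim: q a => [|b q IH] a //=. Qed.

Lemma fcF e : fc e = false <-> e = c.
Proof. by rewrite /fc; split=> [/negbFE/eqP|->] //; rewrite eqxx. Qed.

Lemma rec_last : sg_recognizable V (fun w : word A => last w.1 w.2 = c).
Proof.
apply: rec_ext (rec_pre hLM rec_lastF) => -[a q] /=; split.
- move=> [u [v [_ -> ]]]; rewrite /hL /wcat /= => -[_ e].
  apply/fcF; rewrite -lastH.
  have := congr1 (last true) e; by rewrite /= last_cat.
- move=> e; exists (true, belast (fc a) (flatten (map GL q))), (false, [::]); split=> //.
  rewrite /hL /wcat /= cats1.
  have -> : false = last (fc a) (flatten (map GL q)) by rewrite lastH; apply/esym/fcF.
  by rewrite -lastI.
Qed.

Lemma rec_first : sg_recognizable V (fun w : word A => w.1 = c).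
Proof.
apply: rec_ext (rec_pre hFM rec_firstF) => -[a q] /=; split.
- move=> [u [v [-> _ ]]]; rewrite /hF /wcat /= => -[e1 _].
  by move=> _; apply/fcF.
- move=> e; exists (false, [::]), (true, flatten (map GF q)); split=> //.
  by rewrite /hF /wcat /= (proj2 (@fcF a) e).
Qed.
End FL.

Lemma first_last V (A : finType) : sg_pseudovariety V -> sg_concat_closed V ->
  exists (G : finSemigroup) (g : word A -> scar G),
    [/\ V G, (forall u v, g (wcat u v) = smul (g u) (g v)) &
        (forall u v, g u = g v -> u.1 = v.1 /\ last u.1 u.2 = last v.1 v.2)].
Proof.
move=> HV HC.
pose Lf (i : A * bool) (w : word A) :=
  if i.2 then w.1 = i.1 else last w.1 w.2 = i.1.
have [G [g [HG Hm Hr]]] := rec_family HV (Lf := Lf)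
  (fun i => match i with (a, true) => rec_first HV HC a | (a, false) => rec_last HV HC a end).
exists G, g; split=> // u v e; split.
- by have := Hr (u.1, true) u v e erefl.
- by have := Hr (last u.1 u.2, false) u v e erefl.
Qed.

Definition tagsgd (X : finType) (T : finSemigroup) : finSemigroupoid.
Proof.
refine (@FinSemigroupoid X (prod (prod X (scar T)) X)
  (fun e => e.2) (fun e => e.1.1)
  (fun s t => (s.1.1, smul s.1.2 t.1.2, t.2)) _ _ _) => //.
by move=> s t u _ _ /=; rewrite smulA.
Defined.

Lemma tagsgd_div X T : divides (tagsgd X T) (sgd_of_sg T).
Proof.
apply/div_sg; exists (fun (e : edg (tagsgd X T)) (s : scar T) => s = e.1.2); split.
- by move=> s; exists s.1.2.
- by move=> s t a b _ -> ->.
- by move=> [[x a] y] [[x' a'] y'] b /= -> -> -> ->.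
Qed.

Section Dirs.
Variable V : finSemigroup -> Prop.
Hypothesis HV : sg_pseudovariety V.

Lemma gV_of_V S : V S -> gV V (sgd_of_sg S).
Proof. by move=> HS W _ HW; apply: HW. Qed.

Definition G1 (A : finType) : graph := @Graph unit A (fun _ => tt) (fun _ => tt).

Lemma path1 (A : finType) (a : A) q : path (@gadj (G1 A)) a q.
Proof. by elim: q a => [|b q IH] a //=; rewrite IH /gadj eqxx. Qed.

Definition toP (A : finType) (w : word A) : gpath (G1 A) := exist _ w (path1 w.1 w.2).

Lemma toP_cat (A : finType) (u v : word A) : toP (wcat u v) = pcat (toP u) (toP v).
Proof. by apply: val_inj; rewrite pcat_val //; case: (pdom _); case: (pcod _). Qed.

Lemma dir2 : sgd_concat_closed (gV V) -> sg_concat_closed V.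
Proof.
move=> HC A L K [S1 [phi1 [HS1 Hm1 Hr1]]] [S2 [phi2 [HS2 Hm2 Hr2]]].
pose L' (p : gpath (G1 A)) := L (val p).
pose K' (p : gpath (G1 A)) := K (val p).
have recP : forall (M : word A -> Prop) (S : finSemigroup) (phi : word A -> scar S),
    V S -> (forall u v, phi (wcat u v) = smul (phi u) (phi v)) ->
    (forall u, M u <-> exists v, M v /\ phi v = phi u) ->
    sgd_recognizable (gV V) (fun p : gpath (G1 A) => M (val p)).
  move=> M S phi HS Hm Hr; exists (sgd_of_sg S), (fun _ => tt), (fun p => phi (val p)).
  split; first exact: gV_of_V.
  - split; [by [] | by [] | move=> u v e /=].
    rewrite (pcat_val e); exact: Hm.
  - move=> u; split.
    + by move=> h; exists u.
    + by move=> [v [hv e]]; apply/Hr; exists (val v).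
have [F [fv [fe [HF Hh Hr]]]] := HC _ _ _ (recP _ _ _ HS1 Hm1 Hr1) (recP _ _ _ HS2 Hm2 Hr2).
have [S [HS hd]] := gV_char HV HF.
have [psi [Hm Hk]] := key hd Hh.
exists S, psi; split=> // w; split.
- by move=> h; exists w.
- move=> [v [[v1 [v2 [h1 h2 ->]]] e]].
  have : sgd_concat L' K' (toP w).
    apply/Hr; exists (toP (wcat v1 v2)); split.
    + exists (toP v1), (toP v2); split.
      * exact: h1.
      * exact: h2.
      * by case: (pdom _); case: (pcod _).
      * exact: toP_cat.
    + apply: Hk => //.
  move=> [p1 [p2 [k1 k2 ed ew]]]; exists (val p1), (val p2); split=> //.
  by have := congr1 val ew; rewrite (pcat_val ed) /= => <-.
Qed.

End Dirs.

Section D1.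
Variable V : finSemigroup -> Prop.
Hypothesis HV : sg_pseudovariety V.

Lemma satur (A : graph) (L : gpath A -> Prop) (F : finSemigroupoid)
  (fe : gpath A -> edg F) (S : finSemigroup) (psi : word (gedg A) -> scar S)
  (G : finSemigroup) (g : word (gedg A) -> scar G) :
  (forall u, L u <-> exists v, L v /\ fe v = fe u) ->
  (forall p q : gpath A, pdom p = pdom q -> pcod p = pcod q ->
        psi (val p) = psi (val q) -> fe p = fe q) ->
  (forall u v, g u = g v -> u.1 = v.1 /\ last u.1 u.2 = last v.1 v.2) ->
  forall p q : gpath A, L p -> psi (val p) = psi (val q) -> g (val p) = g (val q) -> L q.
Proof.
move=> Hr Hk Hg p q hp e1 e2; apply/Hr; exists p; split=> //.
have [f l] := Hg _ _ e2.
by apply: Hk => //; rewrite /pdom /pcod ?l ?f.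
Qed.

Lemma dir1 : sg_concat_closed V -> sgd_concat_closed (gV V).
Proof.
move=> HC A L K [F1 [fv1 [fe1 [HF1 Hh1 Hr1]]]] [F2 [fv2 [fe2 [HF2 Hh2 Hr2]]]].
have [S1 [HS1 hd1]] := gV_char HV HF1; have [psi1 [Hm1 Hk1]] := key hd1 Hh1.
have [S2 [HS2 hd2]] := gV_char HV HF2; have [psi2 [Hm2 Hk2]] := key hd2 Hh2.
have [G [g [HG Hmg Hg]]] := first_last (gedg A) HV HC.
case: (HV) => _ _ _ Vprod.
pose L0 (u : word (gedg A)) := exists p : gpath A, L p /\ psi1 (val p) = psi1 u /\ g (val p) = g u.
pose K0 (u : word (gedg A)) := exists p : gpath A, K p /\ psi2 (val p) = psi2 u /\ g (val p) = g u.
have rL0 : sg_recognizable V L0.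
  exists (prod_sg S1 G), (fun u => (psi1 u, g u)); split; first exact: Vprod.
  - by move=> u v; rewrite Hm1 Hmg.
  - move=> u; split; first by move=> h; exists u.
    move=> [v [[p [hp [e1 e2]]] [e3 e4]]]; exists p; split=> //; split; congruence.
have rK0 : sg_recognizable V K0.
  exists (prod_sg S2 G), (fun u => (psi2 u, g u)); split; first exact: Vprod.
  - by move=> u v; rewrite Hm2 Hmg.
  - move=> u; split; first by move=> h; exists u.
    move=> [v [[p [hp [e1 e2]]] [e3 e4]]]; exists p; split=> //; split; congruence.
have [T [psi [HT Hm Hr]]] := HC _ L0 K0 rL0 rK0.
exists (tagsgd (gvtx A) T), id, (fun p => (pcod p, psi (val p), pdom p)); split.
- exact: gV_div (tagsgd_div _ _) (gV_of_V HT).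
- split=> // u v e /=; by rewrite pcat_dom // pcat_cod // pcat_val // Hm.
- move=> w; split; first by move=> h; exists w.
  move=> [v [[v1 [v2 [h1 h2 ev ->]]] e]].
  case: e => ec ep ed.
  have Mw : sg_concat L0 K0 (val w).
    apply/Hr; exists (val (pcat v1 v2)); split; last by [].
    exists (val v1), (val v2); split; [by exists v1 | by exists v2 | exact: pcat_val].
  move: Mw => [u1 [u2 [[p [hp [ep1 eg1]]] [q [hq [ep2 eg2]]] ew]]].
  have Hw : path (@gadj A) (val w).1 (val w).2 := valP w.
  move: Hw; rewrite ew /= cat_path => /andP [Hu1 /= /andP [Hj Hu2]].
  pose w1 : gpath A := exist _ u1 Hu1.
  pose w2 : gpath A := exist _ u2 Hu2.
  have ej : pdom w1 = pcod w2 := eqP Hj.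
  have -> : w = pcat w1 w2 by apply: val_inj; rewrite pcat_val.
  exists w1, w2; split=> //.
  + by apply: (satur Hr1 Hk1 Hg (p := p) (q := w1) hp).
  + by apply: (satur Hr2 Hk2 Hg (p := q) (q := w2) hq).
Qed.
End D1.

Theorem mainTheorem4 (V : finSemigroup -> Prop) :
  sg_pseudovariety V ->
  (sg_concat_closed V <-> sgd_concat_closed (gV V)).
Proof. by move=> HV; split; [apply: dir1 | apply: dir2]. Qed.
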